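(* Suppose $(n,w)$ is an instance of TSP with $w:E_n\to[-1,1]$ and $w[K_n]=d\binom n2$ for some $d\in[0,1]$, and let $H$ be a directed Hamilton cycle of $K_n$ whose vertices in order are $v_0,v_1,\dots,v_{n-1}$. Writing $w_H^+(v_i):=\sum_{i+1\le j\le n-1}|w(v_iv_j)|$, we have $$\sum_{i=1}^{n-2}\frac{w_H^+(v_{i-1})}{n-i}\le \sqrt d\,n+2.$$
   Context: $K_n=(V_n,E_n)$ is the complete graph on $n$ vertices and $w[K_n]=\sum_{e\in E_n}|w(e)|$. *)

(* Defs.v *)
From HB Require Import structures.
From mathcomp Require Import all_boot all_order all_algebra.
Set Implicit Arguments. Unset Strict Implicit. Unset Printing Implicit Defensive.
Import Order.TTheory GRing.Theory Num.Theory.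
Local Open Scope ring_scope.

(* Vertices of K_n are 'I_n; an edge weighting of K_n is a symmetric
   function w : 'I_n -> 'I_n -> R (only values w i j with i <> j matter). *)
Definition sym_weight (R : rcfType) n (w : 'I_n -> 'I_n -> R) : Prop :=
  forall i j, w i j = w j i.

Definition wK (R : rcfType) n (w : 'I_n -> 'I_n -> R) : R :=
  \sum_(i < n) \sum_(j < n | (i < j)%N) `|w i j|.

(* For a Hamilton cycle given by the vertex order v_0, ..., v_{n-1}
   (v : 'I_n -> 'I_n a bijection),
   w_H^+(v_i) = sum_{i+1 <= j <= n-1} |w(v_i v_j)|. *)
Definition wHplus (R : rcfType) n (w : 'I_n -> 'I_n -> R) (v : 'I_n -> 'I_n)
  (i : 'I_n) : R :=
  \sum_(j < n | (i < j)%N) `|w (v i) (v j)|.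

Definition prev_ord n (i : 'I_n) : 'I_n :=
  Ordinal (leq_ltn_trans (leq_pred i) (ltn_ord i)).

(* Main.v *)
Require Import Defs.
From HB Require Import structures.
From mathcomp Require Import all_boot all_order all_algebra.
From mathcomp Require Import ring lra zify.
Import Order.TTheory GRing.Theory Num.Theory.
Local Open Scope ring_scope.

Lemma bin2_double (n : nat) : ('C(n, 2) * 2 = n * n.-1)%N.
Proof.
elim: n => [|n IH] //; rewrite binS bin1 mulnDl IH /=. case: n IH => //= n _. lia.
Qed.

Lemma half_sum (R : realFieldType) n (g : 'I_n -> 'I_n -> R)
  (hg : forall i j, g i j = g j i) :
  2 * (\sum_(i < n) \sum_(j < n | (i < j)%N) g i j)
  = \sum_(i < n) \sum_(j < n) (if i != j then g i j else 0).
Proof.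
have E : forall i j : 'I_n, (if i != j then g i j else 0)
   = (if (i < j)%N then g i j else 0) + (if (j < i)%N then g j i else 0).
  move=> i j; rewrite -(inj_eq val_inj) /=.
  case: (ltngtP i j) => h.
  - by rewrite /= addr0.
  - by rewrite /= add0r hg.
  - by rewrite /= addr0.
symmetry.
under eq_bigr => i _ do under eq_bigr => j _ do rewrite E.
under eq_bigr => i _ do rewrite big_split /=.
rewrite big_split /= [X in _ + X]exchange_big /=.
rewrite mulrDl mul1r; congr (_ + _); apply: eq_bigr => i _;
  by rewrite [RHS]big_mkcond.
Qed.

Lemma sum_wHplus (R : rcfType) n (w : 'I_n -> 'I_n -> R) (v : 'I_n -> 'I_n)
  (hsym : sym_weight w) (hv : bijective v) :
  \sum_(i < n) wHplus w v i = wK w.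
Proof.
have vi := bij_inj hv.
rewrite /wK /wHplus; apply: (mulfI (_ : (2:R) != 0)); first by rewrite pnatr_eq0.
rewrite (@half_sum _ _ (fun i j => `|w (v i) (v j)|)); last by move=> i j; rewrite hsym.
rewrite (@half_sum _ _ (fun i j => `|w i j|)); last by move=> i j; rewrite hsym.
rewrite [RHS](reindex_inj vi); apply: eq_bigr => i _.
rewrite [RHS](reindex_inj vi); apply: eq_bigr => j _.
by rewrite (inj_eq vi).
Qed.
Lemma key (R : realFieldType) (N : nat) : forall (x : nat -> R),
  (forall k, (k < N)%N -> 0 <= x k <= 1) ->
  (\sum_(k < N) x k) ^+ 2 + \sum_(k < N) x k
    <= 2 * \sum_(k < N) (N - k)%:R * x k.
Proof.
elim: N => [|N IH] x hx; first by rewrite !big_ord0 expr2 !mulr0 addr0.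
rewrite !big_ord_recl /=.
have hx' : forall k, (k < N)%N -> 0 <= x k.+1 <= 1 by move=> k hk; apply: hx.
have := IH _ hx'.
set S := \sum_(i < N) x _.
have -> : \sum_(i < N) (N.+1 - bump 0 i)%:R * x (bump 0 i)
       = \sum_(i < N) (N - i)%:R * x i.+1.
  by apply: eq_bigr => i _; rewrite /bump /= add1n subSS.
set T := \sum_(i < N) _.
have hS : S <= N%:R.
  rewrite /S; apply: le_trans (_ : \sum_(i < N) (1:R) <= _).
    by apply: ler_sum => i _; case/andP: (hx' i (ltn_ord i)).
  by rewrite sumr_const card_ord.
have hS0 : 0 <= S.
  by rewrite /S; apply: sumr_ge0 => i _; case/andP: (hx' i (ltn_ord i)).
have /andP[h0 h1] := hx 0%N isT.
rewrite subn0 /bump /= => hT.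
rewrite -addn1 natrD. nra.
Qed.

Theorem proposition4p4 (R : rcfType) (n : nat) (hn : (2 < n)%N)
  (w : 'I_n -> 'I_n -> R) (hsym : sym_weight w)
  (hw : forall i j : 'I_n, i != j -> -1 <= w i j <= 1)
  (d : R) (hd : 0 <= d <= 1) (hwK : wK w = d * ('C(n, 2))%:R)
  (v : 'I_n -> 'I_n) (hv : bijective v) :
  \sum_(i < n | (1 <= i)%N && (i <= n - 2)%N)
     wHplus w v (prev_ord i) / (n - i)%:R
  <= Num.sqrt d * n%:R + 2.
Proof.
have [N eN] : exists N, n = N.+2 by exists n.-2; lia.
subst n.
have vi := bij_inj hv.
have hsum := @sum_wHplus _ _ w v hsym hv.
set h := fun k : nat => wHplus w v (inord k : 'I_N.+2).
have h0 : forall k, 0 <= h k.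
  by move=> k; rewrite /h /wHplus; apply: sumr_ge0 => j _; apply: normr_ge0.
have hb : forall k, (k < N.+2)%N -> h k <= (N.+2 - k.+1)%:R.
  move=> k hk; rewrite /h /wHplus.
  apply: le_trans (_ : \sum_(j < N.+2 | ((inord k : 'I_N.+2) < j)%N) (1:R) <= _).
    apply: ler_sum => j hj.
    have : v (inord k) != v j.
      rewrite (inj_eq vi); apply/negP => /eqP e; move: hj; by rewrite e ltnn.
    by move=> /hw; rewrite ler_norml.
  rewrite inordK //.
  have -> : \sum_(j < N.+2 | (k < j)%N) (1:R) = \sum_(k.+1 <= j < N.+2) 1
    by rewrite big_geq_mkord.
  by rewrite sumr_const_nat.
rewrite big_mkcond big_ord_recl big_ord_recr /=.
have Eb : forall i, bump 0 i = i.+1 by move=> i; rewrite /bump add1n.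
rewrite !Eb !subSS subn0 ltnn add0r addr0.
set x := fun k : nat => h k / (N.+2 - k.+1)%:R.
have -> : \sum_(i < N)
      (if (i.+1 <= N)%N
       then
        wHplus w v
          (prev_ord (lift ord0 (widen_ord (m:=N.+1) (leqnSn N) i))) /
        (N.+2 - i.+1)%:R
       else 0) = \sum_(i < N) x i.
  apply: eq_bigr => i _; rewrite ltn_ord /x /h; congr (wHplus _ _ _ / _).
  apply: val_inj; simpl; rewrite add0n inordK //; apply: (ltn_trans (ltn_ord i)); lia.
have hx : forall k, (k < N)%N -> 0 <= x k <= 1.
  move=> k hk; rewrite /x; apply/andP; split.
    by apply: divr_ge0 => //; apply: ler0n.
  have hp : (0 < (N.+2 - k.+1)%:R :> R) by rewrite ltr0n; lia.
  by rewrite ler_pdivrMr // mul1r; apply: hb; lia.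
have K := @key _ _ _ hx.
have hwx : \sum_(k < N) (N - k)%:R * x k <= \sum_(k < N.+2) h k.
  rewrite (big_ord_widen N.+2 (fun k => (N - k)%:R * x k)) ?leqW //. rewrite big_mkcond /=.
  apply: ler_sum => k _; case: ifP => hk; last by [].
  have hp : (0 < (N.+2 - k.+1)%:R :> R) by rewrite ltr0n; lia.
  rewrite /x mulrA ler_pdivrMr // mulrC; apply: ler_wpM2l => //.
  by rewrite ler_nat; lia.
have hH : \sum_(k < N.+2) h k = wK w.
  by rewrite -hsum; apply: eq_bigr => i _; rewrite /h inord_val.
have hC : (('C(N.+2, 2))%:R * 2 : R) = N.+2%:R * N.+1%:R.
  by rewrite -natrM -natrM bin2_double.
set S := \sum_(k < N) x k in K *.
have hS0 : 0 <= S by apply: sumr_ge0 => k _; case/andP: (hx k (ltn_ord k)).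
have hsq : S ^+ 2 <= d * N.+2%:R ^+ 2.
  have : S ^+ 2 + S <= d * (N.+2%:R * N.+1%:R).
    rewrite -hC; rewrite hH hwK in hwx; nra.
  have : N.+1%:R <= N.+2%:R :> R by rewrite ler_nat.
  case/andP: hd => d0 d1; nra.
have hs0 : 0 <= Num.sqrt d by apply: sqrtr_ge0.
have hsd : Num.sqrt d ^+ 2 = d by apply: sqr_sqrtr; case/andP: hd.
rewrite -hsd in hsq.
have hn0 : 0 <= N.+2%:R :> R by apply: ler0n.
have ht0 : 0 <= Num.sqrt d * N.+2%:R by apply: mulr_ge0.
have ht : S ^+ 2 <= (Num.sqrt d * N.+2%:R) ^+ 2 by rewrite exprMn.
move: ht0 ht; set t := Num.sqrt d * N.+2%:R => ht0 ht.
nra.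
Qed.
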